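(* The functor $\Theta:\mathbf{FinGraph}^l_\star\to\mathbf{FinArb}^<_\star$ (defined below) is well-defined: for every connected, finite, pointed, edge-ordered graph $G$, $\Theta(G)$ is a finite edge-ordered arborescence, and for every lex-homomorphism $h:G\to H$, $\Theta(h)$ is a homomorphism of pointed edge-ordered graphs $\Theta(G)\to\Theta(H)$.
   Context: A (directed) graph is $(V,\to)$ with $\to\subseteq V\times V$; $N(u)$ is the set of outgoing edges of $u$. A pointed graph has a distinguished vertex $v_0$; connected means every vertex is reachable by a path from $v_0$. A path is a finite sequence $v_1\to\cdots\to v_n$ of vertices joined by edges; proper if no vertex repeats; co-initial paths share their source; $\pi\sqsubset\sigma$ means $\pi$ is a proper prefix of $\sigma$. A finite edge-ordered graph is a finite graph with a strict linear order $\triangleleft$ on each neighborhood. Lexicographic path order: if $\pi\sqsubset\sigma$ then $\pi\prec\sigma$ (symmetrically); otherwise, with $\zeta$ the longest common prefix, $u$ its target and $v_1,v_2$ the next vertices, $\pi\prec\sigma$ iff $u\to v_1\triangleleft u\to v_2$. $\min(u\rightsquigarrow v)$ is the $\prec$-least proper path from $u$ to $v$. A homomorphism of finite pointed edge-ordered graphs $h:G\to H$ is a vertex map with (i) $u\to v$ implies $h(u)\to h(v)$; (ii) the distinguished vertex of $G$ is the unique vertex mapped to the distinguished vertex of $H$; (iii) $u\to v_1\triangleleft u\to v_2$ implies $h(u)\to h(v_1)\triangleleft h(u)\to h(v_2)$. A lex-homomorphism additionally satisfies (iv) $h(\min(u\rightsquigarrow v))=\min(h(u)\rightsquigarrow h(v))$,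 where $h$ is applied to paths vertexwise. An arborescence is a pointed graph with a unique path $v_0\rightsquigarrow u$ for every vertex $u$. $\mathbf{FinGraph}^l_\star$: connected, finite, pointed, edge-ordered graphs with lex-homomorphisms; $\mathbf{FinArb}^<_\star$: finite edge-ordered arborescences with homomorphisms of pointed edge-ordered graphs. $\Theta(G)$ has the vertices and distinguished vertex of $G$, contains an edge $u\to v$ iff $u\to v$ is an edge of $\min(v_0\rightsquigarrow v)$ in $G$, and orders co-initial edges as in $G$; $\Theta(h)(v)=h(v)$. *)

(* Defs.v *)
From mathcomp Require Import all_boot.
Unset Printing Implicit Defensive.

(* Edges are a (Prop) relation on a
   finite vertex type; [eord u a b] means  u->a  <|  u->b  (the edge order on
   the neighbourhood N(u), edges being identified with their targets). *)
Record pegraph := PEGraph {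
  vert : finType;
  edge : vert -> vert -> Prop;
  root : vert;
  eord : vert -> vert -> vert -> Prop }.

Definition edge_ordered (G : pegraph) : Prop :=
  forall u : vert G,
    (forall a b, @eord G u a b -> @edge G u a /\ @edge G u b) /\
    (forall a, ~ @eord G u a a) /\
    (forall a b c, @eord G u a b -> @eord G u b c -> @eord G u a c) /\
    (forall a b, @edge G u a -> @edge G u b -> a <> b ->
                 @eord G u a b \/ @eord G u b a).

(* The sequence of vertices  u :: s  is a path (consecutive vertices joined by
   edges). A path is represented by its source u and the list s of the
   remaining vertices; its target is  last u s. *)
Fixpoint gpath {V : Type} (e : V -> V -> Prop) (u : V) (s : seq V) : Prop :=
  match s with
  | [::] => True
  | x :: s' => e u x /\ gpath e x s'
  end.

Definition path_to (G : pegraph) (u v : vert G) (s : seq (vert G)) : Prop :=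
  gpath (@edge G) u s /\ last u s = v.

Definition proper_path_to (G : pegraph) (u v : vert G) (s : seq (vert G)) : Prop :=
  path_to G u v s /\ uniq (u :: s).

Definition connected (G : pegraph) : Prop :=
  forall v : vert G, exists s, path_to G (root G) v s.

Fixpoint lexlt {V : eqType} (o : V -> V -> V -> Prop) (u : V) (s t : seq V)
  : Prop :=
  match s, t with
  | [::], [::] => False
  | [::], _ :: _ => True
  | _ :: _, [::] => False
  | x :: s', y :: t' => if x == y then lexlt o x s' t' else o u x y
  end.

Definition is_min_path (G : pegraph) (u v : vert G) (s : seq (vert G)) : Prop :=
  proper_path_to G u v s /\
  forall t, proper_path_to G u v t -> t = s \/ lexlt (@eord G) u s t.

Definition theta_edge (G : pegraph) (u v : vert G) : Prop :=
  exists s, is_min_path G (root G) v s /\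
            exists a b, root G :: s = a ++ u :: v :: b.

Definition Theta (G : pegraph) : pegraph :=
  @PEGraph (vert G) (theta_edge G) (root G)
    (fun u a b => @eord G u a b /\ theta_edge G u a /\ theta_edge G u b).

Definition arborescence (G : pegraph) : Prop :=
  forall u : vert G, exists! s, path_to G (root G) u s.

Definition pe_hom (G H : pegraph) (h : vert G -> vert H) : Prop :=
  (forall u v, @edge G u v -> @edge H (h u) (h v)) /\
  (forall v, h v = root H <-> v = root G) /\
  (forall u a b, @eord G u a b -> @eord H (h u) (h a) (h b)).

Definition lex_hom (G H : pegraph) (h : vert G -> vert H) : Prop :=
  pe_hom G H h /\
  (forall u v s, is_min_path G u v s -> is_min_path H (h u) (h v) (map h s)).

(* Main.v *)
Require Import Defs.
From mathcomp Require Import all_boot.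
From Stdlib Require Import Classical.

Lemma gpath_cat {V : Type} (e : V -> V -> Prop) u s t :
  gpath e u (s ++ t) <-> gpath e u s /\ gpath e (last u s) t.
Proof.
elim: s u => [|x s IH] u /=; first by tauto.
rewrite IH; tauto.
Qed.

Lemma gpath_rcons {V : Type} (e : V -> V -> Prop) u s z :
  gpath e u (rcons s z) <-> gpath e u s /\ e (last u s) z.
Proof. rewrite -cats1 gpath_cat /=. tauto. Qed.

Lemma lexlt_irr {V : eqType} o (u : V) s : ~ lexlt o u s s.
Proof. elim: s u => [|x s IH] u /=; first by []. rewrite eqxx. exact: IH. Qed.

Lemma lexlt_trans {V : eqType} (o : V -> V -> V -> Prop) :
  (forall u a, ~ o u a a) -> (forall u a b c, o u a b -> o u b c -> o u a c) ->
  forall u s t r, lexlt o u s t -> lexlt o u t r -> lexlt o u s r.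
Proof.
move=> irr tr u s; elim: s u => [|x s IH] u [|y t] [|z r] //=.
case: (x =P y) => [exy|nxy].
  subst y; case: (x =P z) => [exz|nxz]; first by subst z; apply: IH.
  by [].
case: (y =P z) => [eyz|nyz].
  subst z; by case: (x =P y).
case: (x =P z) => [exz|nxz] h1 h2.
  by subst z; case: (irr u x); apply: tr h1 h2.
exact: tr h1 h2.
Qed.

Lemma lexlt_dec {V : eqType} o (u : V) s t : lexlt o u s t ->
  (exists d, t = s ++ d) \/
  exists c x y a b, [/\ s = c ++ x :: a, t = c ++ y :: b, x <> y & o (last u c) x y].
Proof.
elim: s u t => [|x s IH] u [|y t] //=.
- by move=> _; left; exists (y :: t).
case: (x =P y) => [<-|nxy] h.
  case: (IH x t h) => [[d ->]|[c [x' [y' [a [b [-> -> nn oo]]]]]]].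
    by left; exists d.
  by right; exists (x :: c), x', y', a, b.
by right; exists [::], x, y, s, t.
Qed.

Lemma lexlt_branch {V : eqType} o (u : V) c x y a b : x <> y -> o (last u c) x y ->
  lexlt o u (c ++ x :: a) (c ++ y :: b).
Proof.
elim: c u => [|z c IH] u /= nxy h.
  by case: (x =P y).
by rewrite eqxx; apply: IH.
Qed.

Lemma lexlt_total (G : pegraph) : edge_ordered G -> forall u s t,
  gpath (@edge G) u s -> gpath (@edge G) u t -> s <> t ->
  lexlt (@eord G) u s t \/ lexlt (@eord G) u t s.
Proof.
move=> eo u s; elim: s u => [|x s IH] u [|y t] //=.
- by move=> _ _ _; left.
- by move=> _ _ _; right.
move=> [ux ps] [uy pt] ne.
case: (x =P y) => [exy|nxy].
  subst y; rewrite eqxx; apply: IH => //.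
  by move=> est; apply: ne; rewrite est.
have nyx : y <> x by move=> e; apply: nxy.
case: (y =P x) => // _.
by have [_ [_ [_ tot]]] := eo u; apply: tot.
Qed.

Lemma make_uniq {V : eqType} (e : V -> V -> Prop) u s : gpath e u s ->
  exists s', [/\ gpath e u s', last u s' = last u s, uniq (u :: s') &
                 {subset u :: s' <= u :: s}].
Proof.
elim: s u => [|y s IH] u /=.
  by move=> _; exists [::]; split.
move=> [uy ps].
have [m [pm lm um sm]] := IH y ps.
case: (boolP (u \in y :: m)) => [uin|unin].
  have [m1 [m2 E]] : exists m1 m2, y :: m = m1 ++ u :: m2.
    by case/splitPr: uin => m1 m2; exists m1, m2.
  exists m2; split.
  - move: E pm; case: m1 => [|z m1] /= [eyu em]; first by subst.
    by rewrite em => /gpath_cat [_ /= []].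
  - by rewrite -lm -[last y m]/(last u (y :: m)) E last_cat.
  - by move: um; rewrite E cat_uniq => /and3P[].
  - move=> z zin; have : z \in y :: m by rewrite E mem_cat zin orbT.
    by move/sm => h; rewrite in_cons h orbT.
exists (y :: m); split => //=.
- by rewrite unin.
- move=> z; rewrite in_cons => /orP[/eqP ->|/sm]; first by rewrite in_cons eqxx.
  by move=> h; rewrite in_cons h orbT.
Qed.
Lemma list_min {T : eqType} (P : T -> Prop) (lt : T -> T -> Prop) (L : seq T) :
  (forall a b c, P a -> P b -> P c -> lt a b -> lt b c -> lt a c) ->
  (forall a b, P a -> P b -> a <> b -> lt a b \/ lt b a) ->
  forall t0, P t0 -> t0 \in L ->
  exists s, P s /\ forall t, P t -> t \in L -> t = s \/ lt s t.
Proof.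
move=> tr tot; elim: L => [|x L IH] t0 Pt0 //.
rewrite in_cons => t0in.
case: (classic (exists t, P t /\ t \in L)) => [[t1 [Pt1 t1in]]|nex].
  have [s [Ps Hs]] := IH t1 Pt1 t1in.
  case: (classic (P x)) => Px; last first.
    exists s; split => // t Pt; rewrite in_cons => /orP[/eqP et|tin].
      by subst t.
    exact: Hs.
  case: (classic (x = s)) => [exs|nxs].
    subst x; exists s; split => // t Pt; rewrite in_cons => /orP[/eqP et|tin].
      by left.
    exact: Hs.
  case: (tot x s Px Ps nxs) => [lxs|lsx].
    exists x; split => // t Pt; rewrite in_cons => /orP[/eqP et|tin].
      by left.
    case: (Hs t Pt tin) => [->|lst]; first by right.
    by right; apply: (tr x s t).
  exists s; split => // t Pt; rewrite in_cons => /orP[/eqP et|tin].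
    by subst t; right.
  exact: Hs.
have ex0 : t0 = x.
  case/orP: t0in => [/eqP //|t0in]; case: nex; by exists t0.
subst t0; exists x; split => // t Pt; rewrite in_cons => /orP[/eqP et|tin].
  by left.
by case: nex; exists t.
Qed.

Fixpoint allseqs (V : finType) (n : nat) : seq (seq V) :=
  if n is n'.+1 then [::] :: [seq x :: t | x <- enum V, t <- allseqs V n']
  else [:: [::]].

Lemma mem_allseqs (V : finType) n (s : seq V) : size s <= n -> s \in allseqs V n.
Proof.
elim: n s => [|n IH] [|x t] //=.
move=> st; rewrite in_cons; apply/orP; right.
apply: (allpairs_f (fun x t => x :: t)); first by rewrite mem_enum.
exact: IH.
Qed.

Lemma uniq_size (V : finType) (s : seq V) : uniq s -> size s <= #|V|.
Proof. move/card_uniqP => <-; exact: max_card. Qed.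

Lemma eo_irr (G : pegraph) : edge_ordered G -> forall u a, ~ @eord G u a a.
Proof. by move=> eo u; have [_ [? _]] := eo u. Qed.

Lemma eo_trans (G : pegraph) : edge_ordered G ->
  forall u a b c, @eord G u a b -> @eord G u b c -> @eord G u a c.
Proof. by move=> eo u; have [_ [_ [? _]]] := eo u. Qed.

Lemma min_exists (G : pegraph) : edge_ordered G -> forall u v s,
  proper_path_to G u v s -> exists m, is_min_path G u v m.
Proof.
move=> eo u v s Ps.
have memL : forall t, proper_path_to G u v t -> t \in allseqs (vert G) #|vert G|.
  move=> t [_ ut]; apply: mem_allseqs.
  by have := @uniq_size _ _ ut => /= /ltnW.
have [m [Pm Hm]] := @list_min _ (proper_path_to G u v) (lexlt (@eord G) u)
   (allseqs (vert G) #|vert G|)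
   (fun a b c _ _ _ => @lexlt_trans _ _ (eo_irr G eo) (eo_trans G eo) u a b c)
   (fun a b Pa Pb => @lexlt_total G eo u a b Pa.1.1 Pb.1.1) s Ps (memL s Ps).
exists m; split => // t Pt; exact: Hm t Pt (memL t Pt).
Qed.

Lemma min_unique (G : pegraph) : edge_ordered G -> forall u v s s',
  is_min_path G u v s -> is_min_path G u v s' -> s = s'.
Proof.
move=> eo u v s s' [Ps Hs] [Ps' Hs'].
case: (Hs s' Ps') => [->//|l1]; case: (Hs' s Ps) => [//|l2].
by case: (@lexlt_irr _ _ u s (@lexlt_trans _ _ (eo_irr G eo) (eo_trans G eo) _ _ _ _ l1 l2)).
Qed.

Lemma min_prefix (G : pegraph) : edge_ordered G -> forall u v p w q,
  is_min_path G u v (p ++ w :: q) -> is_min_path G u w (rcons p w).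
Proof.
move=> eo u v p w q [[[ps ls] us] Hs].
have Es : p ++ w :: q = rcons p w ++ q by rewrite cat_rcons.
have us' : uniq ((u :: rcons p w) ++ q) by rewrite /= -Es.
have ps' := ps; rewrite Es in ps'; case/gpath_cat: ps' => prw pq.
rewrite last_rcons in pq.
have lq : last w q = v by move: ls; rewrite Es last_cat last_rcons.
have Pp : proper_path_to G u w (rcons p w).
  split; [split => //; exact: last_rcons | by move: us'; rewrite cat_uniq => /and3P[]].
split => // t Pt.
case: (eqVneq t (rcons p w)) => [->|ne]; first by left.
have ne' : t <> rcons p w by move/eqP; rewrite (negbTE ne).
case: (@lexlt_total G eo u t (rcons p w) Pt.1.1 Pp.1.1 ne') => [l|l]; last by right.
exfalso; move: Pt => [[pt lt] ut].
case: (@lexlt_dec _ _ _ _ _ l) => [[d Ed]|[c [x [y [a [b [Et Ep nxy oxy]]]]]]].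
- case: d Ed => [|d1 d'] Ed; first by move: ne; rewrite Ed cats0 eqxx.
  have wd : w \in d1 :: d'.
    have : last u (rcons p w) = w by rewrite last_rcons.
    rewrite Ed last_cat /= => <-; exact: mem_last.
  have wt : w \in u :: t by rewrite -lt mem_last.
  have := Pp.2; rewrite Ed -cat_cons cat_uniq => /and3P[_ /hasPn H _].
  by case/negP: (H w wd).
have Ht := pt; rewrite Et in Ht; case/gpath_cat: Ht => pc /= [cx pa].
have la : last x a = w by rewrite -lt Et last_cat.
have paq : gpath (@edge G) x (a ++ q) by apply/gpath_cat; rewrite la.
have [r1 [pr1 lr1 ur1 sr1]] := make_uniq _ _ _ paq.
have := ut; rewrite Et -cat_cons cat_uniq => /and3P[uc /hasPn Hca _].
move: us'; rewrite cat_uniq => /and3P[_ /hasPn Hq _].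
have Pr : proper_path_to G u v (c ++ x :: r1).
  split; first split.
  + by apply/gpath_cat; split.
  + by rewrite last_cat /= lr1 last_cat la lq.
  + rewrite -cat_cons cat_uniq; apply/and3P; split => //.
    apply/hasPn => z /sr1; rewrite in_cons mem_cat => /or3P [/eqP ->| za | zq].
    * by apply: Hca; rewrite in_cons eqxx.
    * by apply: Hca; rewrite in_cons za orbT.
    * have : z \notin u :: c ++ y :: b by rewrite -Ep; apply: Hq.
      by rewrite -cat_cons mem_cat negb_or => /andP[].
have lr : lexlt (@eord G) u (c ++ x :: r1) (p ++ w :: q).
  rewrite Es Ep -catA /=; exact: lexlt_branch.
case: (Hs _ Pr) => [er|lsr].
  by move: lr; rewrite er; apply: lexlt_irr.
by apply: (@lexlt_irr _ _ u (p ++ w :: q)); exact: (@lexlt_trans _ _ (eo_irr G eo) (eo_trans G eo) _ _ _ _ lsr lr).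
Qed.

Lemma gpath_mid {V : Type} (e : V -> V -> Prop) x s a u v b :
  gpath e x s -> x :: s = a ++ u :: v :: b -> e u v.
Proof.
elim: a x s => [|z a IH] x s /=.
  by move=> H [ex es]; subst x s; exact: H.1.
move=> H [_ es]; case: s H es => [|y s] H es /=; first by case: a es IH.
exact: IH H.2 es.
Qed.

Lemma gpath_pairs {V : Type} (E : V -> V -> Prop) x s :
  (forall a u v b, x :: s = a ++ u :: v :: b -> E u v) -> gpath E x s.
Proof.
elim: s x => [|y s IH] x H //=.
split; first by apply: (H [::] x y s).
apply: IH => a u v b e; apply: (H (x :: a)); by rewrite e.
Qed.

Lemma theta_edge_edge (G : pegraph) u v : theta_edge G u v -> @edge G u v.
Proof. move=> [s [[[[ps _] _] _] [a [b E]]]]; exact: gpath_mid ps E. Qed.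

Lemma theta_parent (G : pegraph) : edge_ordered G -> forall u v,
  theta_edge G u v ->
  exists p, is_min_path G (Defs.root G) v (rcons p v) /\ last (Defs.root G) p = u.
Proof.
move=> eo u v [s [Ms [a [b E]]]].
case: a E => [|z a] /= [ez es].
  exists [::]; split => //.
  by apply: (min_prefix G eo (Defs.root G) v [::] v b); rewrite /= -es.
exists (rcons a u); split; last exact: last_rcons.
apply: (min_prefix G eo (Defs.root G) v (rcons a u) v b).
by rewrite cat_rcons -es.
Qed.

Lemma theta_of_min (G : pegraph) : edge_ordered G -> forall v m a x y b,
  is_min_path G (Defs.root G) v m -> Defs.root G :: m = a ++ x :: y :: b ->
  theta_edge G x y.
Proof.
move=> eo v m a x y b Mm.
case: a => [|z a] /= [ez em].
  exists [:: y]; split; last by exists [::], [::]; rewrite ez.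
  by apply: (min_prefix G eo (Defs.root G) v [::] y b); rewrite /= -em.
exists (rcons (rcons a x) y); split; last first.
  by exists (z :: a), [::]; rewrite ez -!cats1 -!catA.
apply: (min_prefix G eo (Defs.root G) v (rcons a x) y b).
by rewrite cat_rcons -em.
Qed.

Lemma theta_no_root (G : pegraph) : edge_ordered G -> forall u,
  ~ theta_edge G u (Defs.root G).
Proof.
move=> eo u /(theta_parent G eo) [p [[[_ up] _] _]].
by move: up => /= /andP[]; rewrite mem_rcons in_cons eqxx.
Qed.

Lemma theta_in_unique (G : pegraph) : edge_ordered G -> forall u u' v,
  theta_edge G u v -> theta_edge G u' v -> u = u'.
Proof.
move=> eo u u' v /(theta_parent G eo) [p [Mp lp]] /(theta_parent G eo) [p' [Mp' lp']].
have ep := rcons_injl v (min_unique G eo _ _ _ _ Mp Mp').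
by rewrite -lp -lp' ep.
Qed.

Lemma tree_unique {V : Type} (E : V -> V -> Prop) (r : V) :
  (forall u u' v, E u v -> E u' v -> u = u') -> (forall u, ~ E u r) ->
  forall s s', gpath E r s -> gpath E r s' -> last r s = last r s' -> s = s'.
Proof.
move=> inj nor s; elim/last_ind: s => [|s z IH] s'; case/lastP: s' => [|s' z'] //.
- move=> _ /gpath_rcons [_ e] /=; rewrite last_rcons => ez; subst z'.
  by case: (nor _ e).
- move=> /gpath_rcons [_ e] _; rewrite last_rcons /= => ez; subst z.
  by case: (nor _ e).
- move=> /gpath_rcons [ps e] /gpath_rcons [ps' e']; rewrite !last_rcons => ez.
  subst z'; have el := inj _ _ _ e e'.
  by rewrite (IH s' ps ps' el).
Qed.

Theorem lemma10p3 :
  (forall G : pegraph, edge_ordered G -> connected G ->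
     edge_ordered (Theta G) /\ arborescence (Theta G)) /\
  (forall (G H : pegraph) (h : vert G -> vert H),
     edge_ordered G -> connected G -> edge_ordered H -> connected H ->
     lex_hom G H h ->
     pe_hom (Theta G) (Theta H) h).
Proof.
split.
- move=> G eo con; split.
  + move=> u /=; split; [|split; [|split]].
    * by move=> a b [_ [? ?]].
    * by move=> a [h _]; apply: (eo_irr G eo u a).
    * move=> a b c [h1 [t1 _]] [h2 [_ t2]]; split => //.
      exact: (eo_trans G eo _ _ _ _ h1 h2).
    * move=> a b ta tb nab.
      have ea := theta_edge_edge G u a ta.
      have eb := theta_edge_edge G u b tb.
      have [_ [_ [_ tot]]] := eo u.
      by case: (tot a b ea eb nab) => h; [left|right]; split.
  + move=> v /=.
    have [s ps] := con v.
    have [s' [ps' ls' us' _]] := make_uniq _ _ _ ps.1.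
    have Pp : proper_path_to G (Defs.root G) v s'.
      by split; [split; [|rewrite ls' ps.2]|].
    have [m Mm] := min_exists G eo (Defs.root G) v s' Pp.
    have pm : gpath (theta_edge G) (Defs.root G) m.
      by apply: gpath_pairs => a x y b e; apply: (theta_of_min G eo v m a x y b).
    exists m; split.
      by split => //; case: Mm => [[[_ ->]]].
    move=> t [pt lt].
    apply: (tree_unique (theta_edge G) (Defs.root G) (theta_in_unique G eo)
              (theta_no_root G eo) m t pm pt).
    by rewrite lt; case: Mm => [[[_ ->]]].
- move=> G H h eoG conG eoH conH [[he [hr ho]] hm].
  have hroot : h (Defs.root G) = Defs.root H by apply/hr.
  have hte : forall u v, theta_edge G u v -> theta_edge H (h u) (h v).
    move=> u v [s [Ms [a [b E]]]]; exists (map h s); split.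
      by rewrite -hroot; apply: hm.
    exists (map h a), (map h b); rewrite -hroot.
    by change (map h (Defs.root G :: s) = map h a ++ h u :: h v :: map h b); rewrite E map_cat.
  split; [|split].
  + exact: hte.
  + exact: hr.
  + move=> u a b /= [o [ta tb]]; split; [exact: ho | split; exact: hte].
Qed.
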